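(* Fix $X^*\in\mathcal X$ and assume that every neighborhood $U$ of $X^*$ in $\mathcal X$ admits a solution trajectory $X(t)=Q(Y(t))$ of FTQL with $X(t)\in U$ for all $t\ge0$. Then $X^*$ is a Nash equilibrium.
   Context: Quantum game: players $i\in\{1,\dots,N\}$, integers $d_i\ge1$; $\mathbb H^{d}$ is the real vector space of $d\times d$ complex Hermitian matrices; $\mathcal X_i=\{X_i\in\mathbb H^{d_i}:X_i\succeq0,\operatorname{tr}X_i=1\}$, $\mathcal X=\prod_i\mathcal X_i$. Payoffs $u_i(X)=\sum_{\omega\in\Omega}U_i(\omega)\operatorname{tr}[P_\omega(X_1\otimes\cdots\otimes X_N)]$ for a finite set $\Omega$, positive semidefinite $P_\omega$ with $\sum_\omega P_\omega=I$, and real $U_i$. The payoff gradient $V_i(X)\in\mathbb H^{d_i}$ is the unique Hermitian matrix with $u_i(A;X_{-i})=\operatorname{tr}(AV_i(X))$ for all $A\in\mathbb H^{d_i}$. $X^*$ is a Nash equilibrium if $u_i(X^* )\ge u_i(X_i;X^*_{-i})$ for all $X_i\in\mathcal X_i$ and all $i$. Regularizers $h_i(X_i)=\operatorname{tr}\theta_i(X_i)$ with $\theta_i:[0,1]\to\mathbb R$ continuous, twice differentiable on $(0,1]$, $\theta_i(0)=0$, $\inf_{(0,1]}\theta_i''>0$ (matrix functions via eigendecomposition). Mirror map $Q_i(Y_i)=\arg\max_{X_i\in\mathcal X_i}\{\operatorname{tr}(Y_iX_i)-h_i(X_i)\}$, $Q=\prod Q_i$. FTQL dynamics: $\dot Y_i=V_i(X)$,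 $X_i=Q_i(Y_i)$. *)

(* Defs.v *)
From HB Require Import structures.
From mathcomp Require Import all_boot all_order all_algebra.
From mathcomp Require Import complex.
From mathcomp Require Import boolp classical_sets functions reals topology
  normedtype derive set_interval.

Set Implicit Arguments.
Unset Strict Implicit.
Unset Printing Implicit Defensive.

Import Order.TTheory GRing.Theory Num.Theory.
Import numFieldNormedType.Exports.
Local Open Scope classical_set_scope.
Local Open Scope ring_scope.

Section QuantumGame.

Variable R : realType.
Local Notation C := (R[i]).

Definition psd n (A : 'M[C]_n) : Prop :=
  A \is hermsymmx /\
  forall z : 'rV[C]_n, 0 <= (z *m A *m map_mx Num.conj z^T) 0 0.

Definition state n (A : 'M[C]_n) : Prop := psd A /\ \tr A = 1.

Variables (N : nat) (d : 'I_N -> nat).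

(* Index set of the computational basis of H^{d_1} (x) ... (x) H^{d_N}. *)
Definition jidx := {dffun forall j : 'I_N, 'I_(d j)}.

(* Matrices on the joint space are indexed by 'I_#|jidx| (via enum_val). *)
Definition jdim := #|jidx|.

Definition profile := forall i : 'I_N, 'M[C]_(d i).

Definition profile_state (X : profile) : Prop := forall i, state (X i).

Definition kron (X : profile) : 'M[C]_jdim :=
  \matrix_(a, b) \prod_(j < N)
     X j ((enum_val (a : 'I_#|jidx|) : jidx) j) ((enum_val (b : 'I_#|jidx|) : jidx) j).

Definition kron_dev (i : 'I_N) (A : 'M[C]_(d i)) (X : profile) : 'M[C]_jdim :=
  \matrix_(a, b) \prod_(j < N)
     (if j == i then A ((enum_val (a : 'I_#|jidx|) : jidx) i)
                       ((enum_val (b : 'I_#|jidx|) : jidx) i)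
      else X j ((enum_val (a : 'I_#|jidx|) : jidx) j) ((enum_val (b : 'I_#|jidx|) : jidx) j)).

Variables (Omega : finType) (P : Omega -> 'M[C]_jdim) (U : 'I_N -> Omega -> R).

Definition payoffC_dev (i : 'I_N) (A : 'M[C]_(d i)) (X : profile) : C :=
  \sum_(w : Omega) (Complex (U i w) 0) * \tr (P w *m kron_dev A X).

(* real-valued payoffs (the above is real for Hermitian data) *)
Definition payoff_dev (i : 'I_N) (A : 'M[C]_(d i)) (X : profile) : R :=
  complex.Re (payoffC_dev A X).

Definition payoff (i : 'I_N) (X : profile) : R :=
  complex.Re (\sum_(w : Omega) (Complex (U i w) 0) * \tr (P w *m kron X)).

Definition is_payoff_gradient (i : 'I_N) (X : profile) (V : 'M[C]_(d i)) : Prop :=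
  V \is hermsymmx /\
  forall A : 'M[C]_(d i), A \is hermsymmx -> payoffC_dev A X = \tr (A *m V).

Definition nash (X : profile) : Prop :=
  profile_state X /\
  forall (i : 'I_N) (A : 'M[C]_(d i)), state A -> payoff_dev A X <= payoff i X.

Definition mxfun (theta : R -> R) n (X : 'M[C]_n) : 'M[C]_n :=
  invmx (spectralmx X) *m
  diag_mx (\row_j Complex (theta (complex.Re (spectral_diag X 0 j))) 0) *m
  spectralmx X.

Definition reg_h (theta : R -> R) n (X : 'M[C]_n) : R := complex.Re (\tr (mxfun theta X)).

Definition admissible_theta (theta : R -> R) : Prop :=
  {within `[0, 1], continuous theta} /\
  theta 0 = 0 /\
  (forall x : R, 0 < x <= 1 ->
     derivable theta x 1 /\ derivable (derive1 theta) x 1) /\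
  exists2 c : R, 0 < c &
     forall x : R, 0 < x <= 1 -> c <= derive1 (derive1 theta) x.

Definition mirror (theta : R -> R) n (Y X : 'M[C]_n) : Prop :=
  state X /\
  forall X' : 'M[C]_n, state X' ->
    complex.Re (\tr (Y *m X')) - reg_h theta X' <= complex.Re (\tr (Y *m X)) - reg_h theta X.

Definition FTQL_solution (theta : 'I_N -> R -> R)
    (Y X : R -> profile) : Prop :=
  (forall t : R, 0 <= t -> forall i, Y t i \is hermsymmx /\
                                     mirror (theta i) (Y t i) (X t i)) /\
  (forall i a b, {within `[0, +oo[, continuous (fun t => complex.Re (Y t i a b))} /\
                 {within `[0, +oo[, continuous (fun t => complex.Im (Y t i a b))}) /\
  (forall t : R, 0 < t -> forall i, exists V : 'M[C]_(d i),
      is_payoff_gradient (X t) V /\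
      forall a b, is_derive t (1 : R) (fun s => complex.Re (Y s i a b)) (complex.Re (V a b)) /\
                  is_derive t (1 : R) (fun s => complex.Im (Y s i a b)) (complex.Im (V a b))).

End QuantumGame.

(* Main.v *)
Require Import Defs.
From HB Require Import structures.
From mathcomp Require Import all_boot all_order all_algebra.
From mathcomp Require Import complex.
From mathcomp Require Import boolp classical_sets functions reals topology
  normedtype derive set_interval.
From mathcomp Require Import sesquilinear spectral ring lra.
Import Order.TTheory GRing.Theory Num.Theory.
Import numFieldNormedType.Exports.
Local Open Scope classical_set_scope.
Local Open Scope ring_scope.
Set Implicit Arguments.
Unset Strict Implicit.
Unset Printing Implicit Defensive.

Section G.
Variable F : numDomainType.

Lemma prod_norm_le (I : Type) (r : seq I) (a : I -> F) (M : F) :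
  (forall j, `|a j| <= M) -> `|\prod_(j <- r) a j| <= M ^+ size r.
Proof.
move=> H; elim: r => [|x r IH]; first by rewrite big_nil normr1.
rewrite big_cons normrM /= exprS; apply: ler_pM => //.
Qed.

Lemma prod_close (I : Type) (r : seq I) (a b : I -> F) (del M : F) :
  0 <= del -> del <= 1 -> 0 <= M -> (forall j, `|a j - b j| <= del) ->
  (forall j, `|b j| <= M) ->
  `|\prod_(j <- r) a j - \prod_(j <- r) b j| <= del * (size r)%:R * (M + 1) ^+ size r.
Proof.
move=> d0 d1 M0 Hab Hb.
have Ha j : `|a j| <= M + 1.
  have -> : a j = b j + (a j - b j) by rewrite addrC subrK.
  apply: le_trans (ler_normD _ _) _; apply: lerD; [exact: Hb|exact: le_trans (Hab j) d1].
have M10 : 0 <= M + 1 by apply: addr_ge0.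
elim: r => [|x r IH]; first by rewrite !big_nil subrr normr0 !mulr_ge0 ?exprn_ge0 ?ler0n.
rewrite !big_cons /=.
have -> : a x * \prod_(j <- r) a j - b x * \prod_(j <- r) b j =
  (a x - b x) * \prod_(j <- r) a j + b x * (\prod_(j <- r) a j - \prod_(j <- r) b j)
  by ring.
set k := size r.
apply: le_trans (ler_normD _ _) _; rewrite !normrM.
apply: le_trans (_ : del * (M + 1) ^+ k + M * (del * k%:R * (M + 1) ^+ k) <= _).
  apply: lerD; apply: ler_pM => //; try exact: prod_norm_le; exact: Hb.
rewrite -subr_ge0.
have -> : del * (k.+1)%:R * (M + 1) ^+ k.+1 -
     (del * (M + 1) ^+ k + M * (del * k%:R * (M + 1) ^+ k)) =
     del * (M + 1) ^+ k * (k%:R + M).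
  by rewrite exprS -addn1 natrD; ring.
by rewrite !mulr_ge0 ?exprn_ge0 ?addr_ge0 ?ler0n.
Qed.
End G.

Section H.
Variable R : realType.
Local Notation C := (R[i]).

Lemma Re_sum (I : Type) (r : seq I) (F : I -> C) :
  complex.Re (\sum_(i <- r) F i) = \sum_(i <- r) complex.Re (F i).
Proof.
elim: r => [|x r IH]; first by rewrite !big_nil.
by rewrite !big_cons -IH; case: (F x); case: (\sum_(i <- r) F i).
Qed.

Lemma spec_entry n (X : 'M[C]_n) j :
  X \is hermsymmx ->
  spectral_diag X 0 j =
  (row j (spectralmx X) *m X *m map_mx Num.conj (row j (spectralmx X))^T) 0 0.
Proof.
move=> Xh.
have XE : X = invmx (spectralmx X) *m diag_mx (spectral_diag X) *m spectralmx X.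
  by apply/orthomx_spectralP/hermitian_normalmx.
have Su := spectral_unit X.
have Uu := spectral_unitarymx X.
move: XE Su Uu; set S := spectralmx X; set lam := spectral_diag X => XE Su Uu.
have : S *m X *m invmx S = diag_mx lam.
  by rewrite [in LHS]XE !mulmxA mulmxV // mul1mx mulmxK.
rewrite invmx_unitary // => E.
have -> : lam 0 j = (S *m X *m S^t*%sesqui) j j by rewrite E mxE eqxx mulr1n.
rewrite !mxE; apply: eq_bigr => k _; rewrite !mxE; congr (_ * _).
by apply: eq_bigr => l _; rewrite !mxE.
Qed.

Lemma trace_spec n (X : 'M[C]_n) (D : 'M[C]_n) :
  \tr (invmx (spectralmx X) *m D *m spectralmx X) = \tr D.
Proof.
by rewrite mxtrace_mulC mulmxA mulmxV ?spectral_unit // mul1mx.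
Qed.

Lemma spec_range n (X : 'M[C]_n) j : state X ->
  0 <= complex.Re (spectral_diag X 0 j) <= 1.
Proof.
move=> [[Xh Xp] trX].
have ge0 k : 0 <= spectral_diag X 0 k by rewrite spec_entry //; apply: Xp.
have Re0 k : 0 <= complex.Re (spectral_diag X 0 k).
  by have := ge0 k; rewrite lecE => /andP[].
have XE : X = invmx (spectralmx X) *m diag_mx (spectral_diag X) *m spectralmx X.
  by apply/orthomx_spectralP/hermitian_normalmx.
have sum1 : \sum_k complex.Re (spectral_diag X 0 k) = 1.
  by rewrite -Re_sum -mxtrace_diag -(trace_spec X) -XE trX.
rewrite Re0 /= -sum1 (bigD1 j) //= lerDl sumr_ge0 //.
Qed.

Lemma reg_h_lb (theta : R -> R) n : {within `[0, 1], continuous theta} ->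
  exists L : R, forall X : 'M[C]_n, state X -> L <= reg_h theta X.
Proof.
move=> ct; have [c _ cmin] := EVT_min ler01 ct.
exists (theta c *+ n) => X sX.
rewrite /reg_h /mxfun trace_spec mxtrace_diag Re_sum.
rewrite -[n in theta c *+ n]card_ord -sumr_const.
apply: ler_sum => j _; rewrite mxE /=; apply: cmin.
by rewrite in_itv /=; apply: spec_range.
Qed.
End H.

Lemma le_sum_term (F : numDomainType) (T : finType) (f : T -> F) x :
  (forall y, 0 <= f y) -> f x <= \sum_y f y.
Proof. by move=> H; rewrite (bigD1 x) //= lerDl sumr_ge0. Qed.

Lemma tr_close (F : numDomainType) n (M K K0 : 'M[F]_n) (del : F) :
  (forall a b, `|K a b - K0 a b| <= del) ->
  `|\tr (M *m K) - \tr (M *m K0)| <= del * \sum_a \sum_b `|M a b|.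
Proof.
move=> H; rewrite -raddfB -mulmxBr /mxtrace.
apply: le_trans (ler_norm_sum _ _ _) _; rewrite mulr_sumr; apply: ler_sum => a _.
rewrite mxE; apply: le_trans (ler_norm_sum _ _ _) _; rewrite mulr_sumr.
apply: ler_sum => b _; rewrite normrM mulrC; apply: ler_wpM2r => //.
by rewrite !mxE; apply: H.
Qed.

Lemma entry_le_sum2 (F : numDomainType) m n (A : 'M[F]_(m, n)) a b :
  `|A a b| <= \sum_a \sum_b `|A a b|.
Proof.
apply: le_trans (@le_sum_term _ _ (fun b' => `|A a b'|) b (fun _ => normr_ge0 _)) _.
apply: (@le_sum_term _ _ (fun a' => \sum_b `|A a' b|)) => a'.
by apply: sumr_ge0.
Qed.

Section Game.
Variable R : realType.
Local Notation C := (R[i]).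
Variables (N : nat) (d : 'I_N -> nat) (Omega : finType)
  (P : Omega -> 'M[C]_(jdim d)) (U : 'I_N -> Omega -> R).

Lemma Re_le (x y : C) : x <= y -> complex.Re x <= complex.Re y.
Proof. by rewrite lecE => /andP[]. Qed.

Lemma ReB (x y : C) : complex.Re x - complex.Re y = complex.Re (x - y).
Proof. by case: x; case: y. Qed.

Lemma Re_norm_le (w : C) : `|complex.Re w| <= complex.Re `|w|.
Proof.
rewrite normc_def /= -sqrtr_sqr ler_sqrt ?addr_ge0 ?sqr_ge0 //.
by rewrite lerDl sqr_ge0.
Qed.

Lemma payoff_close i (B0 : 'M[C]_(d i)) (X0 : profile R d) :
  exists k : R, 0 <= k /\
  forall del : R, 0 <= del -> del <= 1 ->
  forall (B : 'M[C]_(d i)) (X : profile R d),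
  (forall a b, `|B a b - B0 a b| <= (del%:C)%C) ->
  (forall j a b, `|X j a b - X0 j a b| <= (del%:C)%C) ->
  `|complex.Re (payoffC_dev P U B X) - complex.Re (payoffC_dev P U B0 X0)| <= del * k.
Proof.
set M : C := \sum_a \sum_b `|B0 a b| + \sum_j \sum_a \sum_b `|X0 j a b|.
have M0 : 0 <= M.
  apply: addr_ge0; first by apply: sumr_ge0 => a _; apply: sumr_ge0.
  by apply: sumr_ge0 => j _; apply: sumr_ge0 => a _; apply: sumr_ge0.
set Kc : C := \sum_w `|Complex (U i w) 0| *
   ((\sum_a \sum_b `|P w a b|) * (N%:R * (M + 1) ^+ N)).
have Kc0 : 0 <= Kc.
  apply: sumr_ge0 => w _; apply: mulr_ge0 => //; apply: mulr_ge0.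
    by apply: sumr_ge0 => a _; apply: sumr_ge0.
  by apply: mulr_ge0; [exact: ler0n|apply: exprn_ge0; exact: addr_ge0].
pose k : R := complex.Re Kc.
exists k; split; first by have := Re_le Kc0.
move=> del d0 d1 B X HB HX.
have dC0 : 0 <= (del%:C)%C :> C by rewrite ler0c.
have dC1 : (del%:C)%C <= 1 :> C by rewrite -[1]/((1%:C)%C) lecR.
suff H : `|payoffC_dev P U B X - payoffC_dev P U B0 X0| <= (del%:C)%C * Kc.
  rewrite ReB; apply: le_trans (Re_norm_le _) _; apply: le_trans (Re_le H) _.
  by rewrite /k; case: (Kc) => x y /=; rewrite mul0r subr0.
rewrite /payoffC_dev -sumrB /Kc mulr_sumr.
apply: le_trans (ler_norm_sum _ _ _) _; apply: ler_sum => w _.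
rewrite -mulrBr normrM.
set S := \sum_a \sum_b `|P w a b|.
set Mp := (M + 1) ^+ N.
have -> : (del%:C)%C * (`|Complex (U i w) 0| * (S * (N%:R * Mp))) =
   `|Complex (U i w) 0| * (((del%:C)%C * N%:R * Mp) * S) by ring.
apply: ler_wpM2l => //; apply: tr_close => a b; rewrite !mxE.
have sz : size (index_enum 'I_N) = N by rewrite -[index_enum _]enumT size_enum_ord.
rewrite /Mp -[N in N%:R]sz -[N in _ ^+ N]sz.
apply: prod_close => //.
- move=> j; case: eqP => _; [exact: HB|exact: HX].
- have s0 (m n : nat) (A : 'M[C]_(m, n)) : 0 <= \sum_a \sum_b `|A a b|.
    by apply: sumr_ge0 => a' _; apply: sumr_ge0.
  move=> j; case: eqP => _.
  + apply: le_trans (entry_le_sum2 B0 _ _) _.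
    rewrite /M ?lerDl ?lerDr; apply: sumr_ge0 => j' _; exact: s0.
  + apply: le_trans (entry_le_sum2 (X0 j) _ _) _.
    apply: le_trans (@le_sum_term _ _ (fun j' => \sum_a \sum_b `|X0 j' a b|) j
      (fun j' => s0 _ _ (X0 j'))) _.
    rewrite /M ?lerDl ?lerDr; exact: s0.
Qed.
End Game.

Section Main.
Variable R : realType.
Local Notation C := (R[i]).

Lemma herm_sub n (B D : 'M[C]_n) :
  B \is hermsymmx -> D \is hermsymmx -> B - D \is hermsymmx.
Proof.
move=> /is_hermitianmxP hB /is_hermitianmxP hD; apply/is_hermitianmxP.
rewrite expr0 scale1r in hB hD *.
apply/matrixP => a b; rewrite {1}hB {1}hD !mxE; rewrite ?mul1r rmorphB ?mul1r ?mxE //=.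
Qed.

Lemma kron_dev_self (N : nat) (d : 'I_N -> nat) (X : profile R d) i :
  kron_dev (X i) X = kron X.
Proof.
apply/matrixP => a b; rewrite !mxE; apply: eq_bigr => j _.
by case: eqP => // ->.
Qed.

Lemma norm_le_ReIm (w : C) (e : R) :
  `|complex.Re w| < e -> `|complex.Im w| < e -> `|w| <= ((2 * e)%:C)%C.
Proof.
move=> ha hb; have e0 : 0 < e by apply: le_lt_trans ha.
rewrite normc_def lecR.
have -> : 2 * e = Num.sqrt ((2 * e) ^+ 2).
  by rewrite sqrtr_sqr ger0_norm // mulr_ge0 // ltW.
rewrite ler_sqrt ?sqr_ge0 //.
rewrite -(real_normK (num_real (complex.Re w))) -(real_normK (num_real (complex.Im w))).
have h1 := normr_ge0 (complex.Re w); have h2 := normr_ge0 (complex.Im w).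
nra.
Qed.

Lemma is_derive_lin (f g : R -> R) t df dg (k l : R) :
  is_derive t (1 : R) f df -> is_derive t (1 : R) g dg ->
  is_derive t (1 : R) (fun s => f s * k - g s * l) (df * k - dg * l).
Proof.
move=> hf hg.
have H := is_deriveB (is_deriveZ k hf) (is_deriveZ l hg).
have -> : (fun s => f s * k - g s * l) = k \*: f - l \*: g.
  by apply/funext => s /=; rewrite (mulrC (f s)) (mulrC (g s)).
apply: is_derive_eq H _; by rewrite (mulrC df) (mulrC dg).
Qed.

Lemma is_derive_sumf n (h : 'I_n -> R -> R) t (dh : 'I_n -> R) :
  (forall i, is_derive t (1 : R) (h i) (dh i)) ->
  is_derive t (1 : R) (fun s => \sum_(i < n) h i s) (\sum_(i < n) dh i).
Proof.
move=> H; rewrite -fct_sumE; exact: is_derive_sum.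
Qed.

Lemma Re_tr n (M B : 'M[C]_n) : complex.Re (\tr (M *m B)) =
  \sum_a \sum_b (complex.Re (M a b) * complex.Re (B b a) -
                 complex.Im (M a b) * complex.Im (B b a)).
Proof.
rewrite /mxtrace Re_sum; apply: eq_bigr => a _; rewrite mxE Re_sum.
by apply: eq_bigr => b _; case: (M a b) => x y; case: (B b a).
Qed.

Lemma deriv_trace n (Y : R -> 'M[C]_n) (B V : 'M[C]_n) t :
  (forall a b, is_derive t (1 : R) (fun s => complex.Re (Y s a b)) (complex.Re (V a b)) /\
               is_derive t (1 : R) (fun s => complex.Im (Y s a b)) (complex.Im (V a b))) ->
  is_derive t (1 : R) (fun s => complex.Re (\tr (Y s *m B))) (complex.Re (\tr (V *m B))).
Proof.
move=> H.
have -> : (fun s => complex.Re (\tr (Y s *m B))) = (fun s =>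
  \sum_a \sum_b (complex.Re (Y s a b) * complex.Re (B b a) -
                 complex.Im (Y s a b) * complex.Im (B b a))).
  by apply/funext => s; rewrite Re_tr.
rewrite Re_tr; apply: is_derive_sumf => a.
have -> : (fun s => \sum_b (complex.Re (Y s a b) * complex.Re (B b a) -
                 complex.Im (Y s a b) * complex.Im (B b a))) =
   (fun s => \sum_b (fun b s => (complex.Re (Y s a b) * complex.Re (B b a) -
                 complex.Im (Y s a b) * complex.Im (B b a))) b s) by [].
apply: is_derive_sumf => b; have [h1 h2] := H a b.
exact: is_derive_lin.
Qed.

Lemma tr_close_Re n (M : 'M[C]_n) : exists s : R, forall (del : R) (K K0 : 'M[C]_n),
  0 <= del -> (forall a b, `|K a b - K0 a b| <= (del%:C)%C) ->
  `|complex.Re (\tr (M *m K)) - complex.Re (\tr (M *m K0))| <= del * s.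
Proof.
exists (complex.Re (\sum_a \sum_b `|M a b|)) => del K K0 d0 H.
have := tr_close M H => /Re_le; rewrite ReB => H2.
apply: le_trans (Re_norm_le _) _; apply: le_trans H2 _.
by case: (\sum_a \sum_b `|M a b|) => x y /=; rewrite mul0r subr0.
Qed.

Lemma subsub (x y z : C) : (x - y) - (x - z) = - (y - z).
Proof. by ring. Qed.

End Main.


Theorem lemmaD1 (R : realType) (N : nat) (d : 'I_N -> nat)
  (Omega : finType) (P : Omega -> 'M[R[i]]_(jdim d)) (U : 'I_N -> Omega -> R)
  (theta : 'I_N -> R -> R) (Xs : profile R d) :
  (forall i, (0 < d i)%N) ->
  (forall w, psd (P w)) ->
  \sum_(w : Omega) P w = 1%:M ->
  (forall i, admissible_theta (theta i)) ->
  profile_state Xs ->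
  (* every neighbourhood of Xs in the joint state space contains a whole
     FTQL trajectory X(t) = Q(Y(t)), t >= 0 *)
  (forall eps : R, 0 < eps ->
     exists (Y X : R -> profile R d),
       FTQL_solution P U theta Y X /\
       forall t : R, 0 <= t -> forall i a b,
         `|complex.Re (X t i a b - Xs i a b)| < eps /\ `|complex.Im (X t i a b - Xs i a b)| < eps) ->
  nash P U Xs.
Proof.
move=> dpos Ppsd Psum adm Xs_st Htraj.
split => // i A sA.
rewrite leNgt; apply/negP => Hlt.
set c := payoff_dev P U A Xs - payoff P U i Xs.
have c0 : 0 < c by rewrite subr_gt0.
have [k1 [k10 Hk1]] := payoff_close P U A Xs.
have [k2 [k20 Hk2]] := payoff_close P U (Xs i) Xs.
pose del : R := Num.min 1 (c / (4 * (k1 + k2 + 1))).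
have K0 : 0 < 4 * (k1 + k2 + 1) by apply: mulr_gt0 => //; apply: ltr_wpDl => //; apply: addr_ge0.
have del0 : 0 < del by rewrite lt_min ltr01 /= divr_gt0.
have del1 : del <= 1 by rewrite ge_min lexx.
have delK : del * (k1 + k2) <= c / 4.
  have : del <= c / (4 * (k1 + k2 + 1)) by rewrite ge_min lexx orbT.
  rewrite ler_pdivlMr // => h.
  have : 0 <= del * (k1 + k2) by rewrite mulr_ge0 ?addr_ge0 // ltW.
  nra.
pose eps := del / 2.
have eps0 : 0 < eps by rewrite divr_gt0.
have [Y [X [[Hmir [_ Hder]] Hclose]]] := Htraj eps eps0.
have Xcl t j a b : 0 <= t -> `|X t j a b - Xs j a b| <= (del%:C)%C.
  move=> t0; have [h1 h2] := Hclose t t0 j a b.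
  have := norm_le_ReIm h1 h2; rewrite (_ : 2 * eps = del) //; rewrite /eps; lra.
have hA : A \is hermsymmx by case: sA => [[]].
have hX t : 0 <= t -> X t i \is hermsymmx.
  by move=> t0; have [_ [[[hx _] _] _]] := Hmir t t0 i.
have [L hL] := @reg_h_lb R (theta i) (d i) (adm i).1.
have [S1 HS1] := tr_close_Re (Y 1 i).
pose r1 := complex.Re (\tr (Y 1 i *m (A - Xs i))).
pose hAv := reg_h (theta i) A.
pose Q := hAv - L - r1 + del * S1 + c / 2.
pose T := 1 + 2 * `|Q| / c.
have T1 : 1 <= T by rewrite lerDl divr_ge0 ?mulr_ge0 // ltW.
have T0 : 0 <= T by apply: le_trans T1.
have TQ : T * (c / 2) = c / 2 + `|Q|.
  rewrite /T; field; exact: lt0r_neq0.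
pose B := A - X T i.
pose F (s : R) : R := complex.Re (\tr (Y s i *m B)).
pose g (s : R) : R := F s * 1 - s * (c / 2).
have gder (x : R) : 0 < x -> exists dg : R, is_derive x (1 : R) g dg /\ 0 <= dg.
  move=> x0; have [V [[Vh Vgrad] Vd]] := Hder x x0 i.
  have hF : is_derive x (1 : R) F (complex.Re (\tr (V *m B))).
    exact: (deriv_trace (Y := fun s => Y s i)).
  exists (complex.Re (\tr (V *m B)) * 1 - 1 * (c / 2)); split.
    exact: is_derive_lin hF (is_derive_id x 1).
  rewrite mxtrace_mulC /B mulmxBl raddfB /= -(Vgrad A hA) -(Vgrad _ (hX T T0)) -ReB.
  have h1 := Hk1 del (ltW del0) del1 A (X x)
    (fun a b => ltac:(by rewrite subrr normr0 ler0c ltW)) (fun j a b => Xcl x j a b (ltW x0)).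
  have h2 := Hk2 del (ltW del0) del1 (X T i) (X x)
    (fun a b => Xcl T i a b T0) (fun j a b => Xcl x j a b (ltW x0)).
  have e1 : payoff_dev P U A Xs = complex.Re (payoffC_dev P U A Xs) by [].
  have e2 : payoff P U i Xs = complex.Re (payoffC_dev P U (Xs i) Xs).
    by rewrite /payoffC_dev kron_dev_self.
  move: c0 delK h1 h2; rewrite /c e1 e2.
  set a1 := complex.Re (payoffC_dev P U A (X x)).
  set a2 := complex.Re (payoffC_dev P U (X T i) (X x)).
  set b1 := complex.Re (payoffC_dev P U A Xs).
  set b2 := complex.Re (payoffC_dev P U (Xs i) Xs).
  move=> c0' delK' h1 h2.
  have := ler_norml (a1 - b1) (del * k1); rewrite h1 => /esym /andP[h1a _].
  have := ler_norml (a2 - b2) (del * k2); rewrite h2 => /esym /andP[_ h2b].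
  nra.
have gmono : g 1 <= g T.
  apply: (@ger0_derive1_ndecry _ g 1) => //.
  - move=> x; rewrite in_itv /= andbT => x1.
    have [dg [hg _]] := gder x (lt_trans ltr01 x1); exact: ex_derive.
  - move=> x; rewrite in_itv /= andbT => x1.
    have [dg [hg dg0]] := gder x (lt_trans ltr01 x1).
    by rewrite derive1E derive_val.
  - apply: derivable_within_continuous => x; rewrite in_itv /= andbT => x1.
    have [dg [hg _]] := gder x (lt_le_trans ltr01 x1); exact: ex_derive.
have up : F T <= hAv - L.
  have [_ Hm] := (Hmir T T0 i).2.
  have := Hm A sA; have := hL (X T i) (Hmir T T0 i).2.1.
  rewrite /F /B mulmxBr raddfB /= -ReB /hAv; lra.
have low : r1 - del * S1 <= F 1.
  have := HS1 del B (A - Xs i) (ltW del0).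
  have H : forall a b, `|B a b - (A - Xs i) a b| <= (del%:C)%C.
    by move=> a b; rewrite !mxE subsub normrN; apply: Xcl.
  move=> /(_ H); rewrite /F /r1 => h.
  have := ler_norml (complex.Re (\tr (Y 1 i *m B)) - complex.Re (\tr (Y 1 i *m (A - Xs i)))) (del * S1).
  rewrite h => /esym /andP[ha _]; lra.
have QQ := ler_norm Q.
move: gmono; rewrite /g !mulr1 mul1r.
move: TQ QQ up low; rewrite /Q; lra.
Qed.
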